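(* Let $\mathbb{W}$ be a subgroup of the finite group $\mathbb{W}_2$ that contains the group $\mathbb{W}_2^{\mathfrak{A}}$, and let $G$ be a $\mathbb{W}$-invariant finite subgroup of $\mathbb{T}_2$. Then there exists $n\in\mathbb{N}$ such that one of the following three possibilities holds: \begin{enumerate} \item $G\cong\mu_n^3$; \item $n$ is even and $G\cong\mu_{n}^2\times\mu_{\frac{n}{2}}$; \item $n$ is even and $G\cong\mu_{n}\times\mu_{\frac{n}{2}}^2$. \end{enumerate} Here $\mu_k$ denotes the cyclic group of order $k$.
   Context: $\mathbb{T}_2=\mathbb{G}_m^3=\mathrm{Spec}\,\mathbb{C}[M_2]$ with $M_2=\mathbb{Z}^3$, and $\mathrm{GL}_3(\mathbb{Z})=\mathrm{GL}(M_2)$ acts on $\mathbb{T}_2$ by group automorphisms (a matrix $A$ acting via $\chi^m\mapsto\chi^{A(m)}$ on characters). $\mathbb{W}_2\subset\mathrm{GL}_3(\mathbb{Z})$ is the group generated by the permutation matrices and the diagonal sign matrices $\mathrm{diag}(-1,1,1)$, $\mathrm{diag}(1,-1,1)$, $\mathrm{diag}(1,1,-1)$; $\mathbb{W}_2\cong\mathfrak{S}_4\times\mu_2$. $\mathbb{W}_2^{\mathfrak{A}}$ is its unique subgroup isomorphic to $\mathfrak{A}_4$, generated by the permutation matrices of order $3$ together with $\mathrm{diag}(-1,-1,1)$ and $\mathrm{diag}(-1,1,-1)$. *)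

(* Defs.v *)
From HB Require Import structures.
From mathcomp Require Import all_boot all_order all_algebra all_fingroup.
Set Implicit Arguments. Unset Strict Implicit. Unset Printing Implicit Defensive.
Import Order.TTheory GRing.Theory Num.Theory.
Local Open Scope ring_scope.

Definition i0 : 'I_3 := @Ordinal 3 0 isT.
Definition i1 : 'I_3 := @Ordinal 3 1 isT.
Definition i2 : 'I_3 := @Ordinal 3 2 isT.

(* Points of the torus T_2 = G_m^3 over C, as row vectors with (nonzero) entries. *)
Definition pt (C : fieldType) := 'rV[C]_3.

Definition in_torus (C : fieldType) (t : pt C) : Prop := forall i, t 0 i != 0.
Definition tone (C : fieldType) : pt C := const_mx 1.
Definition tmul (C : fieldType) (t s : pt C) : pt C := \row_i (t 0 i * s 0 i).
Definition tinv (C : fieldType) (t : pt C) : pt C := \row_i (t 0 i)^-1.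

(* Action of A in GL_3(Z) = GL(M_2) on T_2: the automorphism phi_A with
   phi_A^*(chi^m) = chi^(A m), i.e. phi_A(t)_i = prod_j t_j^(A_ji). *)
Definition tact (C : fieldType) (A : 'M[int]_3) (t : pt C) : pt C :=
  \row_i \prod_(j < 3) (t 0 j) ^ (A j i).

Definition finite_subgroup (C : fieldType) (G : pt C -> Prop) : Prop :=
  [/\ exists s : seq (pt C), forall t, G t <-> t \in s,
      forall t, G t -> in_torus t,
      G (tone C),
      forall t s, G t -> G s -> G (tmul t s)
    & forall t, G t -> G (tinv t)].

Inductive gen_grp (S : 'M[int]_3 -> Prop) : 'M[int]_3 -> Prop :=
| gen_one : gen_grp S 1%:M
| gen_in A : S A -> gen_grp S A
| gen_mul A B : gen_grp S A -> gen_grp S B -> gen_grp S (A *m B)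
| gen_inv A : gen_grp S A -> gen_grp S (invmx A).

Definition diag3 (a b c : int) : 'M[int]_3 :=
  \matrix_(i, j) if i == j then [:: a; b; c]`_i else 0.

Definition W2_gens (A : 'M[int]_3) : Prop :=
  (exists s : 'S_3, A = perm_mx s) \/
  A = diag3 (-1) 1 1 \/ A = diag3 1 (-1) 1 \/ A = diag3 1 1 (-1).
Definition W2 := gen_grp W2_gens.

Definition W2A_gens (A : 'M[int]_3) : Prop :=
  (exists s : 'S_3, #[s]%g = 3%N /\ A = perm_mx s) \/
  A = diag3 (-1) (-1) 1 \/ A = diag3 (-1) 1 (-1).
Definition W2A := gen_grp W2A_gens.

Definition is_subgroup (W : 'M[int]_3 -> Prop) : Prop :=
  [/\ W 1%:M, forall A B, W A -> W B -> W (A *m B) & forall A, W A -> W (invmx A)].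

Definition in_mu3 (C : fieldType) (a b c : nat) (x : pt C) : Prop :=
  [/\ x 0 i0 ^+ a = 1, x 0 i1 ^+ b = 1 & x 0 i2 ^+ c = 1].

Definition iso_mu3 (C : fieldType) (G : pt C -> Prop) (a b c : nat) : Prop :=
  exists f : pt C -> pt C,
  [/\ forall x, in_mu3 a b c x -> G (f x),
      forall x y, in_mu3 a b c x -> in_mu3 a b c y -> f x = f y -> x = y,
      forall g, G g -> exists2 x, in_mu3 a b c x & f x = g
    & forall x y, in_mu3 a b c x -> in_mu3 a b c y -> f (tmul x y) = tmul (f x) (f y)].

(* Main.v *)
Require Import Defs.
From HB Require Import structures.
From mathcomp Require Import all_boot all_order all_algebra all_fingroup cyclic ring.
Import Order.TTheory GRing.Theory Num.Theory.
Set Implicit Arguments. Unset Strict Implicit. Unset Printing Implicit Defensive.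
Local Open Scope ring_scope.

Definition mk3 (C : fieldType) (a b c : C) : pt C := \row_i [:: a; b; c]`_i.

Lemma mk3E0 (C : fieldType) (a b c : C) : mk3 a b c 0 i0 = a.
Proof. by rewrite mxE. Qed.
Lemma mk3E1 (C : fieldType) (a b c : C) : mk3 a b c 0 i1 = b.
Proof. by rewrite mxE. Qed.
Lemma mk3E2 (C : fieldType) (a b c : C) : mk3 a b c 0 i2 = c.
Proof. by rewrite mxE. Qed.

Lemma ptE (C : fieldType) (t : pt C) : t = mk3 (t 0 i0) (t 0 i1) (t 0 i2).
Proof.
apply/rowP => i; rewrite mxE.
by case: i => [[|[|[|i]]] Hi] //=; congr (t 0 _); apply/val_inj.
Qed.

Lemma mk3_eq (C : fieldType) (a b c a' b' c' : C) :
  a = a' -> b = b' -> c = c' -> mk3 a b c = mk3 a' b' c'.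
Proof. by move=> -> -> ->. Qed.

Lemma tmul3 (C : fieldType) (a b c a' b' c' : C) :
  tmul (mk3 a b c) (mk3 a' b' c') = mk3 (a * a') (b * b') (c * c').
Proof.
by apply/rowP => i; rewrite !mxE; case: i => [[|[|[|i]]] Hi].
Qed.

Lemma tone3 (C : fieldType) : tone C = mk3 1 1 1.
Proof. by apply/rowP => i; rewrite !mxE; case: i => [[|[|[|i]]] Hi]. Qed.

Lemma tactE (C : fieldType) (A : 'M[int]_3) (t : pt C) i :
  tact A t 0 i = t 0 i0 ^ (A i0 i) * t 0 i1 ^ (A i1 i) * t 0 i2 ^ (A i2 i).
Proof.
rewrite mxE !big_ord_recl big_ord0 mulr1 mulrA.
have e0 : (ord0 : 'I_3) = i0 by apply/val_inj.
have e1 : lift ord0 (ord0 : 'I_2) = i1 by apply/val_inj.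
have e2 : lift ord0 (lift ord0 (ord0 : 'I_1)) = i2 by apply/val_inj.
by rewrite e2 e1 e0.
Qed.

Definition sig3 : 'S_3 := perm (@ordS_inj 3).
Lemma sig3_order : #[sig3]%g = 3%N.
Proof.
have e3 : (sig3 ^+ 3 = 1)%g.
  apply/permP => i; rewrite !expgSr expg0 mul1g !permM !permE.
  by case: i => [[|[|[|i]]] Hi] //=; apply/val_inj.
have : (#[sig3]%g %| 3)%N by rewrite order_dvdn e3.
have : #[sig3]%g != 1%N.
  rewrite order_eq1; apply/eqP => /permP /(_ ord0); rewrite permE perm1 => /(congr1 val) //.
by case: #[sig3]%g => [|[|[|[|n]]]].
Qed.

Lemma tact_rot (C : fieldType) (t : pt C) :
  tact (perm_mx sig3) t = mk3 (t 0 i2) (t 0 i0) (t 0 i1).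
Proof.
apply/rowP => i; rewrite tactE !mxE !permE.
by case: i => [[|[|[|i]]] Hi] //=; rewrite ?expr0z ?expr1z ?mul1r ?mulr1.
Qed.

Lemma tact_dn (C : fieldType) (t : pt C) :
  tact (diag3 (-1) (-1) 1) t = mk3 (t 0 i0)^-1 (t 0 i1)^-1 (t 0 i2).
Proof.
apply/rowP => i; rewrite tactE !mxE.
by case: i => [[|[|[|i]]] Hi] //=; rewrite ?expr0z ?expr1z ?exprN1 ?mul1r ?mulr1.
Qed.

Lemma fin_mu (F : fieldType) (S : seq F) : uniq S -> 1 \in S ->
  (forall x, x \in S -> x != 0) ->
  (forall x y, x \in S -> y \in S -> x * y \in S) ->
  forall x, (x \in S) = (x ^+ size S == 1).
Proof.
move=> uS S1 S0 SM.
have fwd : forall x, x \in S -> x ^+ size S = 1.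
  move=> x xS; have x0 := S0 x xS.
  have uM : uniq (map ( *%R x) S) by rewrite map_inj_uniq //; exact: mulfI.
  have sub : {subset map ( *%R x) S <= S} by move=> y /mapP [z zS ->]; exact: SM.
  have [_ eqS] := uniq_min_size uM sub (eq_leq (esym (size_map _ _))).
  have pe : perm_eq (map ( *%R x) S) S by apply: uniq_perm.
  have : \prod_(y <- map ( *%R x) S) y = \prod_(y <- S) y by apply: perm_big.
  rewrite big_map big_split /= big_const_seq count_predT.
  have -> : iter (size S) ( *%R x) 1 = x ^+ size S.
    by elim: (size S) => [|n IH] //=; rewrite IH exprS.
  have nz : \prod_(i <- S) i != 0 by rewrite prodf_seq_neq0; apply/allP => y /S0.
  by move=> h; apply: (mulIf nz); rewrite mul1r.
move=> x; apply/idP/idP => [/fwd -> //|/eqP xm].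
apply/negPn/negP => xS.
have pos : (0 < size S)%N by case: (S) S1.
have := max_unity_roots (rs := x :: S) pos.
have al : all (size S).-unity_root (x :: S).
  by rewrite /= unity_rootE xm eqxx; apply/allP => y /fwd; rewrite unity_rootE => ->.
have u : uniq (x :: S) by rewrite /= xS uS.
by move=> /(_ al u); rewrite /= ltnn.
Qed.

Lemma core (C : fieldType) (two0 : (2:C) != 0) (G : pt C -> Prop) :
  finite_subgroup G ->
  (forall a b c, G (mk3 a b c) -> G (mk3 c a b)) ->
  (forall a b c, G (mk3 a b c) -> G (mk3 a^-1 b^-1 c)) ->
  exists n : nat,
    iso_mu3 G n n n \/
    (~~ odd n /\ iso_mu3 G n n n./2) \/
    (~~ odd n /\ iso_mu3 G n n./2 n./2).
Proof.
case=> [[s Gs] Gtor G1 GM _] Grot Gdn.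
have GM3 : forall a b c a' b' c', G (mk3 a b c) -> G (mk3 a' b' c') ->
    G (mk3 (a * a') (b * b') (c * c')).
  by move=> a b c a' b' c' h1 h2; rewrite -tmul3; apply: GM.
have Grot2 : forall a b c, G (mk3 a b c) -> G (mk3 b c a) by move=> a b c /Grot /Grot.
have Gt0 : forall a b c, G (mk3 a b c) -> [/\ a != 0, b != 0 & c != 0].
  move=> a b c /Gtor h; split; [have := h i0 | have := h i1 | have := h i2];
  by rewrite ?mk3E0 ?mk3E1 ?mk3E2.
have G1' : G (mk3 1 1 1) by rewrite -tone3.
pose P := undup [seq (g : pt C) 0 i0 | g <- s].
have memP : forall x, x \in P <-> exists b c, G (mk3 x b c).
  move=> x; rewrite mem_undup; split.
    by case/mapP=> g gs ->; exists (g 0 i1), (g 0 i2); rewrite -ptE; apply/Gs.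
  by case=> b [c] /Gs h; apply/mapP; exists (mk3 x b c); rewrite ?mk3E0.
pose H := undup [seq (g : pt C) 0 i0 | g <- s & ((g : pt C) 0 i1 == 1) && ((g : pt C) 0 i2 == 1)].
have memH : forall x, x \in H <-> G (mk3 x 1 1).
  move=> x; rewrite mem_undup; split.
    case/mapP=> g; rewrite mem_filter => /andP [/andP [/eqP e1 /eqP e2] gs] ->.
    by move/Gs: gs; rewrite (ptE g) e1 e2 !mk3E0.
  move/Gs=> h; apply/mapP; exists (mk3 x 1 1); rewrite ?mk3E0 //.
  by rewrite mem_filter mk3E1 mk3E2 !eqxx.
pose m := size P; pose k := size H.
have hP : forall x, (exists b c, G (mk3 x b c)) <-> x ^+ m = 1.
  move=> x; rewrite -memP (fin_mu (undup_uniq _)); first by split => /eqP.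
  - by apply/memP; exists 1, 1.
  - by move=> y /memP [b [c /Gt0 []]].
  move=> y z /memP [b [c h1]] /memP [b' [c' h2]]; apply/memP.
  by exists (b * b'), (c * c'); apply: GM3.
have hH : forall x, G (mk3 x 1 1) <-> x ^+ k = 1.
  move=> x; rewrite -memH (fin_mu (undup_uniq _)); first by split => /eqP.
  - by apply/memH.
  - by move=> y /memH /Gt0 [].
  move=> y z /memH h1 /memH h2; apply/memH.
  by rewrite -[1]mulr1; apply: GM3.
have D1 : forall a b c, G (mk3 a b c) -> [/\ a ^+ m = 1, b ^+ m = 1 & c ^+ m = 1].
  move=> a b c h; split; apply/hP.
  - by exists b, c.
  - by exists c, a; apply: Grot2.
  - by exists a, b; apply: Grot.
have hH1 : forall x, x ^+ k = 1 -> G (mk3 1 x 1) by move=> x /hH /Grot.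
have hH2 : forall x, x ^+ k = 1 -> G (mk3 1 1 x) by move=> x /hH /Grot2.
have kpos : (0 < k)%N.
  have h1 : 1 \in H by apply/memH.
  by rewrite /k; case: (H) h1.
have mpos : (0 < m)%N.
  have h1 : 1 \in P by apply/memP; exists 1, 1.
  by rewrite /m; case: (P) h1.
have kdm : (k %| m)%N.
  apply/negPn/negP => nd.
  have mk0 : (0 < m %% k)%N by rewrite lt0n.
  suff : (k <= m %% k)%N by rewrite leqNgt ltn_pmod.
  apply: (max_unity_roots mk0) (undup_uniq _).
  apply/allP => x /memH hx; rewrite unity_rootE.
  have xk : x ^+ k = 1 by apply/hH.
  have : x ^+ m = 1 by apply/hP; exists 1, 1.
  by rewrite {1}(divn_eq m k) exprD mulnC exprM xk expr1n mul1r => ->.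
have SQ : forall x : C, x ^+ m = 1 -> x ^+ (k * 2) = 1.
  move=> x xm; have [b [c /Grot2 h]] := proj2 (hP x) xm.
  have [b0 c0 _] := Gt0 _ _ _ h.
  have := GM3 _ _ _ _ _ _ h (Gdn _ _ _ h); rewrite !mulfV // => /Grot.
  by move/hH; rewrite -expr2 -exprM mulnC.
have m2k : (m <= k * 2)%N.
  have kp2 : (0 < k * 2)%N by rewrite muln_gt0 kpos.
  apply: (max_unity_roots kp2) (undup_uniq _).
  by apply/allP => x /memP /hP /SQ; rewrite unity_rootE => ->.

have muk3 : forall a b c : C, a ^+ k = 1 -> b ^+ k = 1 -> c ^+ k = 1 -> G (mk3 a b c).
  move=> a b c ha hb hc.
  have := GM3 _ _ _ _ _ _ (GM3 _ _ _ _ _ _ (proj2 (hH a) ha) (hH1 _ hb)) (hH2 _ hc).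
  by rewrite !mulr1 !mul1r.
have nz : forall x : C, x ^+ m = 1 -> x != 0.
  move=> x hx; apply/eqP => z; move: hx; rewrite z expr0n (gtn_eqF mpos) => /eqP.
  by rewrite eq_sym oner_eq0.
have [q mq] : exists q, m = (q * k)%N by case/dvdnP: kdm => q ->; exists q.
have q2 : (q <= 2)%N by rewrite -(leq_pmul2r kpos) -mq mulnC.
have q0 : (0 < q)%N by move: mpos; rewrite mq muln_gt0 => /andP [].
case: q mq q2 q0 => [|[|[|q]]] // mq _ _.
  rewrite mul1n in mq.
  exists m; left; exists id; split => //.
  - move=> x [h0 h1 h2]; rewrite (ptE x); apply: muk3; by rewrite -mq.
  - move=> g Gg; exists g => //; rewrite (ptE g) in Gg.
    by case: (D1 _ _ _ Gg) => *; split.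
have m1 : (-1 : C) != 1.
  apply/eqP => h; move: two0; rewrite (_ : (2:C) = 1 + 1); last by rewrite -mulr2n.
  by rewrite -{2}h subrr eqxx.
have m1' : (1 == -1 :> C) = false by rewrite eq_sym (negbTE m1).
have km : forall x : C, x ^+ k = 1 -> x ^+ m = 1.
  by move=> x hx; rewrite mq mulnC exprM hx expr1n.
have sg : forall x : C, x ^+ m = 1 -> (x ^+ k == 1) || (x ^+ k == -1).
  by move=> x; rewrite mq mulnC exprM -sqrf_eq1 => ->.
have NEG : forall x : C, x ^+ m = 1 -> (x ^+ k == -1) = ~~ (x ^+ k == 1).
  move=> x /sg /orP [] /eqP ->; rewrite eqxx /=;
  by rewrite ?(negbTE m1) // eq_sym (negbTE m1).
have SE : forall x y : C, x ^+ m = 1 -> y ^+ m = 1 ->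
    (x ^+ k == 1) = (y ^+ k == 1) -> x ^+ k = y ^+ k.
  move=> x y /sg /orP [] /eqP -> /sg /orP [] /eqP -> //;
  by rewrite eqxx ?(negbTE m1).
have L1 : forall a b c, G (mk3 a b c) ->
    (b ^+ k == 1) ==> (c ^+ k == 1) ==> (a ^+ k == 1).
  move=> a b c h; apply/implyP => /eqP hb; apply/implyP => /eqP hc; apply/eqP.
  have [_ b0 c0] := Gt0 _ _ _ h.
  have h1 : (b^-1) ^+ k = 1 by rewrite exprVn hb invr1.
  have h2 : (c^-1) ^+ k = 1 by rewrite exprVn hc invr1.
  have := GM3 _ _ _ _ _ _ (GM3 _ _ _ _ _ _ h (hH1 _ h1)) (hH2 _ h2).
  by rewrite !mulr1 !mulfV // => /hH.
have L1b : forall a b c, G (mk3 a b c) ->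
    (c ^+ k == 1) ==> (a ^+ k == 1) ==> (b ^+ k == 1).
  by move=> a b c /Grot2 /L1.
have L1c : forall a b c, G (mk3 a b c) ->
    (a ^+ k == 1) ==> (b ^+ k == 1) ==> (c ^+ k == 1).
  by move=> a b c /Grot /L1.
have SH : forall a' b' c' a b c, G (mk3 a' b' c') ->
    a ^+ k = a' ^+ k -> b ^+ k = b' ^+ k -> c ^+ k = c' ^+ k -> G (mk3 a b c).
  move=> a' b' c' a b c h ea eb ec; have [a0 b0 c0] := Gt0 _ _ _ h.
  rewrite (_ : a = a' * (a / a')); last by rewrite mulrC divfK.
  rewrite (_ : b = b' * (b / b')); last by rewrite mulrC divfK.
  rewrite (_ : c = c' * (c / c')); last by rewrite mulrC divfK.
  apply: GM3 h (muk3 _ _ _ _ _ _); rewrite expr_div_n ?ea ?eb ?ec divff //;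
  exact: expf_neq0.
have ex_m1 : exists a b c, G (mk3 a b c) /\ a ^+ k = -1.
  have : ~~ all (fun x => x ^+ k == 1) P.
    apply/negP => al.
    have : (m <= k)%N.
      apply: (max_unity_roots kpos) (undup_uniq _).
      by apply/allP => x /(allP al); rewrite unity_rootE.
    by rewrite mq -{2}(mul1n k) leq_pmul2r.
  case/allPn => x /memP [b [c h]] hx; exists x, b, c; split => //.
  have := sg x (proj1 (and3_rec (fun a _ _ => conj a I) (D1 _ _ _ h))).
  by rewrite (negbTE hx) /= => /eqP.
have mh : m./2 = k by rewrite mq mul2n doubleK.
have modd : ~~ odd m by rewrite mq oddM.
case hq : (has (fun g : pt C =>
   [&& (g 0 i0) ^+ k == -1, (g 0 i1) ^+ k == -1 & (g 0 i2) ^+ k == -1]) s).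
  case/hasP: hq => g gs /and3P [/eqP ga /eqP gb /eqP gc].
  move/Gs: gs; rewrite (ptE g); move: ga gb gc.
  set xa := g 0 i0; set xb := g 0 i1; set xc := g 0 i2 => ga gb gc hs.
  have charG : forall a b c, G (mk3 a b c) <->
      [/\ a ^+ m = 1, b ^+ m = 1, c ^+ m = 1, a ^+ k = b ^+ k & a ^+ k = c ^+ k].
    move=> a b c; split.
      move=> h; have [ha hb hc] := D1 _ _ _ h; split => //; apply: SE => //.
      - have hf := GM3 _ _ _ _ _ _ h hs.
        move: (L1 _ _ _ hf) (L1b _ _ _ hf) (L1c _ _ _ hf).
        rewrite !exprMn ga gb gc !mulrN1 ?mulr1 !eqr_oppLR !NEG //.
        move: (L1 _ _ _ h) (L1b _ _ _ h) (L1c _ _ _ h).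
        by case: (a ^+ k == 1); case: (b ^+ k == 1); case: (c ^+ k == 1).
      - have hf := GM3 _ _ _ _ _ _ h hs.
        move: (L1 _ _ _ hf) (L1b _ _ _ hf) (L1c _ _ _ hf).
        rewrite !exprMn ga gb gc !mulrN1 ?mulr1 !eqr_oppLR !NEG //.
        move: (L1 _ _ _ h) (L1b _ _ _ h) (L1c _ _ _ h).
        by case: (a ^+ k == 1); case: (b ^+ k == 1); case: (c ^+ k == 1).
    case=> ha hb hc eab eac; case/orP: (sg a ha) => /eqP ea.
      by apply: muk3; rewrite -?eab -?eac.
    by apply: (SH _ _ _ _ _ _ hs); rewrite -?eab -?eac ?ea ?ga ?gb ?gc.
  exists m; right; right; split => //; rewrite mh.
  exists (fun x : pt C => mk3 (x 0 i0) (x 0 i0 * x 0 i1) (x 0 i0 * x 0 i2)); split.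
  - move=> x [h0 h1 h2]; apply/charG.
    by rewrite !exprMn h1 h2 !mulr1 (km _ h1) (km _ h2) h0 !mulr1.
  - move=> x y [hx0 _ _] _ e.
    have e0 := congr1 (fun t : pt C => t 0 i0) e.
    have e1 := congr1 (fun t : pt C => t 0 i1) e.
    have e2 := congr1 (fun t : pt C => t 0 i2) e.
    rewrite /= !mk3E0 in e0; rewrite /= !mk3E1 in e1; rewrite /= !mk3E2 in e2.
    rewrite e0 in e1 e2.
    rewrite (ptE x) (ptE y) e0; apply: mk3_eq => //; apply: (mulfI (nz _ hx0));
    by rewrite e0.
  - move=> t; rewrite (ptE t) => /charG [ha hb hc eab eac].
    exists (mk3 (t 0 i0) (t 0 i1 / t 0 i0) (t 0 i2 / t 0 i0)).
      split; rewrite ?mk3E0 ?mk3E1 ?mk3E2 // expr_div_n -?eab -?eac divff //;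
      exact: expf_neq0 (nz _ ha).
    rewrite !mk3E0 !mk3E1 !mk3E2; apply: mk3_eq => //;
    by rewrite mulrCA mulfV ?mulr1 // (nz _ ha).
  - move=> x y _ _; rewrite tmul3 /tmul !mxE /=; apply: mk3_eq; ring.
have nQ : forall a b c, G (mk3 a b c) ->
    ~~ [&& a ^+ k == -1, b ^+ k == -1 & c ^+ k == -1].
  move=> a b c /Gs h; apply: contraFN hq => H3; apply/hasP; exists (mk3 a b c) => //.
  by rewrite !mk3E0 !mk3E1 !mk3E2.
have [w1 [w2 [w3 [hw [ew1 ew2 ew3]]]]] : exists w1 w2 w3, G (mk3 w1 w2 w3) /\
    [/\ w1 ^+ k = -1, w2 ^+ k = -1 & w3 ^+ k = 1].
  case: ex_m1 => z [b1 [c1 [h ez]]]; have [_ hb hc] := D1 _ _ _ h.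
  case/orP: (sg _ hb) => /eqP eb; case/orP: (sg _ hc) => /eqP ec.
  - by move: (L1 _ _ _ h); rewrite eb ec ez eqxx (negbTE m1).
  - by exists c1, z, b1; split => //; apply: Grot.
  - by exists z, b1, c1.
  - by move: (nQ _ _ _ h); rewrite eb ec ez eqxx.
have hw' := Grot _ _ _ hw.
have hw'' := Grot2 _ _ _ hw.
have charG : forall a b c, G (mk3 a b c) <->
    [/\ a ^+ m = 1, b ^+ m = 1, c ^+ m = 1 & (a * b * c) ^+ k = 1].
  move=> a b c; split.
    move=> h; have [ha hb hc] := D1 _ _ _ h; split => //.
    move: (L1 _ _ _ h) (L1b _ _ _ h) (L1c _ _ _ h) (nQ _ _ _ h).
    rewrite !exprMn; case/orP: (sg _ ha) => /eqP ->; case/orP: (sg _ hb) => /eqP ->;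
    case/orP: (sg _ hc) => /eqP ->; rewrite ?eqxx ?(negbTE m1) ?m1' //= => *; ring.
  case=> ha hb hc; rewrite !exprMn.
  case/orP: (sg _ ha) => /eqP ea; case/orP: (sg _ hb) => /eqP eb;
  case/orP: (sg _ hc) => /eqP ec; rewrite ea eb ec => e.
  - exact: muk3.
  - by exfalso; move/eqP: m1; apply; apply: (etrans _ e); ring.
  - by exfalso; move/eqP: m1; apply; apply: (etrans _ e); ring.
  - by apply: (SH _ _ _ _ _ _ hw'); rewrite ?ea ?eb ?ec ?ew1 ?ew2 ?ew3.
  - by exfalso; move/eqP: m1; apply; apply: (etrans _ e); ring.
  - by apply: (SH _ _ _ _ _ _ hw''); rewrite ?ea ?eb ?ec ?ew1 ?ew2 ?ew3.
  - by apply: (SH _ _ _ _ _ _ hw); rewrite ?ea ?eb ?ec ?ew1 ?ew2 ?ew3.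
  - by exfalso; move/eqP: m1; apply; apply: (etrans _ e); ring.
exists m; right; left; split => //; rewrite mh.
exists (fun x : pt C => mk3 (x 0 i0) (x 0 i1) (x 0 i2 / (x 0 i0 * x 0 i1))); split.
- move=> x [h0 h1 h2]; apply/charG.
  have p0 : x 0 i0 * x 0 i1 != 0 by rewrite mulf_neq0 // nz.
  split => //.
    by rewrite expr_div_n exprMn h0 h1 (km _ h2) mulr1 divr1.
  by rewrite mulrC divfK.
- move=> x y [hx0 hx1 _] _ e.
  have e0 := congr1 (fun t : pt C => t 0 i0) e.
  have e1 := congr1 (fun t : pt C => t 0 i1) e.
  have e2 := congr1 (fun t : pt C => t 0 i2) e.
  rewrite /= !mk3E0 in e0; rewrite /= !mk3E1 in e1; rewrite /= !mk3E2 in e2.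
  rewrite -e0 -e1 in e2.
  have p0 : (x 0 i0 * x 0 i1)^-1 != 0 by rewrite invr_eq0 mulf_neq0 // nz.
  by rewrite (ptE x) (ptE y) e0 e1 (mulIf p0 e2).
- move=> g; rewrite (ptE g) => /charG [ha hb hc e].
  have p0 : g 0 i0 * g 0 i1 != 0 by rewrite mulf_neq0 // nz.
  exists (mk3 (g 0 i0) (g 0 i1) (g 0 i2 * (g 0 i0 * g 0 i1))).
    by split; rewrite ?mk3E0 ?mk3E1 ?mk3E2 // mulrC.
  by rewrite !mk3E0 !mk3E1 !mk3E2 mulfK.
- move=> x y _ _; rewrite tmul3 /tmul !mxE /=; apply: mk3_eq => //.
  by rewrite !invfM; ring.
Qed.

Theorem lemma7p1 (C : closedFieldType) (charC0 : [pchar C] =i pred0)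
  (W : 'M[int]_3 -> Prop) (G : pt C -> Prop) :
  is_subgroup W ->
  (forall A, W A -> W2 A) ->
  (forall A, W2A A -> W A) ->
  finite_subgroup G ->
  (forall A t, W A -> G t -> G (tact A t)) ->
  exists n : nat,
    iso_mu3 G n n n \/
    (~~ odd n /\ iso_mu3 G n n n./2) \/
    (~~ odd n /\ iso_mu3 G n n./2 n./2).
Proof.
move=> sW WW2 W2AW fG WG.
apply: core fG _ _.
- have := charC0 2; rewrite !inE /=.
  by move/negbT.
- move=> a b c h.
  have hw : W (perm_mx sig3).
    by apply: W2AW; apply: gen_in; left; exists sig3; rewrite sig3_order.
  by have := WG _ _ hw h; rewrite tact_rot !mk3E0 !mk3E1 !mk3E2.
- move=> a b c h.
  have hw : W (diag3 (-1) (-1) 1) by apply: W2AW; apply: gen_in; right; left.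
  by have := WG _ _ hw h; rewrite tact_dn !mk3E0 !mk3E1 !mk3E2.
Qed.
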